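(* The subvarieties $\mathsf{BA}$ and $\mathsf{SL}$ of $V(\mathsf{BCA})$ are independent. That is, there is a binary term $\varphi(x,y)$ in the type $\langle\wedge,\vee,\neg,J_2,0,1\rangle$ such that $\mathsf{BA}\models\varphi(x,y)\approx x$ and $\mathsf{SL}\models\varphi(x,y)\approx y$.
   Context: $\mathbf{WK}^e$ is the three-element algebra on $\{0,\tfrac12,1\}$ of type $\langle\wedge,\vee,\neg,J_2,0,1\rangle$. Its operations are: - $\neg$ swaps $0,1$ and fixes $\tfrac12$; - $\wedge,\vee$ are Boolean on $\{0,1\}$ and return $\tfrac12$ if some argument is $\tfrac12$; - $J_2(1)=1$ and $J_2(\tfrac12)=J_2(0)=0$. $\mathsf{BCA}=ISP(\mathbf{WK}^e)$ and $V(\mathsf{BCA})=HSP(\mathbf{WK}^e)$. $\mathsf{BA}$ is the subvariety of $V(\mathsf{BCA})$ axiomatised relative to it by $J_2x\approx x$. $\mathsf{SL}$ is the subvariety axiomatised relative to it by $J_2x\approx1$. *)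

(* Defs.v *)
Record alg : Type := Alg {
  car :> Type;
  a_meet : car -> car -> car;
  a_join : car -> car -> car;
  a_neg : car -> car;
  a_J2 : car -> car;
  a_zero : car;
  a_one : car
}.

Inductive term (V : Type) : Type :=
  | tVar : V -> term V
  | tMeet : term V -> term V -> term V
  | tJoin : term V -> term V -> term V
  | tNeg : term V -> term V
  | tJ2 : term V -> term V
  | tZero : term V
  | tOne : term V.
Arguments tVar {V} _.
Arguments tMeet {V} _ _.
Arguments tJoin {V} _ _.
Arguments tNeg {V} _.
Arguments tJ2 {V} _.
Arguments tZero {V}.
Arguments tOne {V}.

Fixpoint eval (A : alg) {V : Type} (v : V -> A) (t : term V) : A :=
  match t with
  | tVar x => v x
  | tMeet s u => a_meet A (eval A v s) (eval A v u)
  | tJoin s u => a_join A (eval A v s) (eval A v u)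
  | tNeg s => a_neg A (eval A v s)
  | tJ2 s => a_J2 A (eval A v s)
  | tZero => a_zero A
  | tOne => a_one A
  end.

Definition models (A : alg) {V : Type} (s t : term V) : Prop :=
  forall v : V -> A, eval A v s = eval A v t.

Inductive three : Type := T0 | Thalf | T1.

Definition wk_neg (a : three) : three :=
  match a with T0 => T1 | Thalf => Thalf | T1 => T0 end.
Definition wk_meet (a b : three) : three :=
  match a, b with
  | Thalf, _ | _, Thalf => Thalf
  | T1, T1 => T1
  | _, _ => T0
  end.
Definition wk_join (a b : three) : three :=
  match a, b with
  | Thalf, _ | _, Thalf => Thalf
  | T0, T0 => T0
  | _, _ => T1
  end.
Definition wk_J2 (a : three) : three :=
  match a with T1 => T1 | _ => T0 end.

Definition WKe : alg := Alg three wk_meet wk_join wk_neg wk_J2 T0 T1.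

(** H S P (WK^e): A is a homomorphic image of a subalgebra of a direct power
    WK^e^I. *)
Definition in_VBCA (A : alg) : Prop :=
  exists (I : Type) (S : (I -> three) -> Prop) (f : (I -> three) -> A),
    (forall x y, S x -> S y -> S (fun i => wk_meet (x i) (y i))) /\
    (forall x y, S x -> S y -> S (fun i => wk_join (x i) (y i))) /\
    (forall x, S x -> S (fun i => wk_neg (x i))) /\
    (forall x, S x -> S (fun i => wk_J2 (x i))) /\
    S (fun _ => T0) /\ S (fun _ => T1) /\
    (forall x y, S x -> S y ->
       f (fun i => wk_meet (x i) (y i)) = a_meet A (f x) (f y)) /\
    (forall x y, S x -> S y ->
       f (fun i => wk_join (x i) (y i)) = a_join A (f x) (f y)) /\
    (forall x, S x -> f (fun i => wk_neg (x i)) = a_neg A (f x)) /\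
    (forall x, S x -> f (fun i => wk_J2 (x i)) = a_J2 A (f x)) /\
    f (fun _ => T0) = a_zero A /\ f (fun _ => T1) = a_one A /\
    (forall a : A, exists x, S x /\ f x = a).

Definition in_BA (A : alg) : Prop :=
  in_VBCA A /\ models A (tJ2 (tVar tt)) (tVar tt).
Definition in_SL (A : alg) : Prop :=
  in_VBCA A /\ models A (tJ2 (tVar tt)) tOne.

Inductive xy : Type := vx | vy.

(* Main.v *)
Require Import Defs.
From Stdlib Require Import FunctionalExtensionality.

Lemma facts (A : alg) : in_VBCA A ->
  (forall a : A, a_meet A (a_J2 A a) (a_neg A (a_J2 A a)) = a_zero A) /\
  (forall a : A, a_join A a (a_zero A) = a) /\
  (a_J2 A (a_zero A) = a_zero A) /\
  (a_neg A (a_one A) = a_zero A) /\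
  (forall a : A, a_meet A a (a_one A) = a) /\
  (forall a : A, a_join A (a_zero A) a = a).
Proof.
  intros (I & S & f & Hm & Hj & Hn & HJ & H0 & H1 & fm & fj & fn & fJ & f0 & f1 & fs).
  repeat split.
  - intro a. destruct (fs a) as [x [Sx <-]].
    rewrite <- fJ, <- fn, <- fm, <- f0; auto.
    f_equal. apply functional_extensionality; intro i. destruct (x i); reflexivity.
  - intro a. destruct (fs a) as [x [Sx <-]].
    rewrite <- f0, <- fj; auto. f_equal.
    apply functional_extensionality; intro i. destruct (x i); reflexivity.
  - rewrite <- f0, <- fJ; auto.
  - rewrite <- f0, <- f1, <- fn; auto.
  - intro a. destruct (fs a) as [x [Sx <-]].
    rewrite <- f1, <- fm; auto. f_equal.
    apply functional_extensionality; intro i. destruct (x i); reflexivity.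
  - intro a. destruct (fs a) as [x [Sx <-]].
    rewrite <- f0, <- fj; auto. f_equal.
    apply functional_extensionality; intro i. destruct (x i); reflexivity.
Qed.

Theorem theorem4p10 :
  exists phi : term xy,
    (forall A : alg, in_BA A -> models A phi (tVar vx)) /\
    (forall A : alg, in_SL A -> models A phi (tVar vy)).
Proof.
  exists (tJoin (tJ2 (tVar vx)) (tMeet (tVar vy) (tNeg (tJ2 (tVar vy))))).
  split.
  - intros A [HV HB] v. destruct (facts A HV) as (F1 & F2 & F3 & F4 & F5 & F6).
    unfold models in HB. simpl in *.
    assert (HJ : forall a : A, a_J2 A a = a) by (intro a; exact (HB (fun _ => a))).
    pose proof (F1 (v vy)) as E. rewrite !HJ in E.
    rewrite !HJ, E, F2. reflexivity.
  - intros A [HV HB] v. destruct (facts A HV) as (F1 & F2 & F3 & F4 & F5 & F6).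
    unfold models in HB. simpl in *.
    assert (HJ : forall a : A, a_J2 A a = a_one A) by (intro a; exact (HB (fun _ => a))).
    assert (E01 : a_zero A = a_one A) by (rewrite <- F3; apply HJ).
    rewrite !HJ, F4, E01, F5, <- E01, F6. reflexivity.
Qed.
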